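(* Let $E$ be a non-empty cohesive almost zero-dimensional space, and let $Y$ be a completely metrizable separable space containing $E$ as a subspace. Then there is a completely metrizable cohesive almost zero-dimensional space $E'$ with $E\subset E'\subset Y$.
   Context: All spaces are separable and metrizable. A subset $A$ of a space $X$ is a C-set in $X$ if $A$ is an intersection of clopen subsets of $X$. A space $X$ is almost zero-dimensional if every point of $X$ has a neighborhood basis consisting of C-sets in $X$. A space $X$ is cohesive if every point $x\in X$ has a neighborhood which contains no non-empty clopen subset of $X$. *)

(* Defs.v *)
From Stdlib Require Export Reals.
Open Scope R_scope.

(* A topology on T is represented by its predicate of open sets. *)
Definition topology (T : Type) := (T -> Prop) -> Prop.

Definition is_metric {X : Type} (d : X -> X -> R) : Prop :=
  (forall x y, 0 <= d x y) /\
  (forall x y, d x y = 0 <-> x = y) /\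
  (forall x y, d x y = d y x) /\
  (forall x y z, d x z <= d x y + d y z).

Definition metric_open {X : Type} (d : X -> X -> R) : topology X :=
  fun U => forall x, U x -> exists eps, 0 < eps /\ forall y, d x y < eps -> U y.

Definition cauchy {X : Type} (d : X -> X -> R) (u : nat -> X) : Prop :=
  forall eps, 0 < eps -> exists N, forall m n, (N <= m)%nat -> (N <= n)%nat -> d (u m) (u n) < eps.

Definition converges {X : Type} (d : X -> X -> R) (u : nat -> X) (l : X) : Prop :=
  forall eps, 0 < eps -> exists N, forall n, (N <= n)%nat -> d (u n) l < eps.

Definition complete_metric {X : Type} (d : X -> X -> R) : Prop :=
  forall u, cauchy d u -> exists l, converges d u l.

Definition countable_set {T : Type} (D : T -> Prop) : Prop :=
  exists f : T -> nat, forall x y, D x -> D y -> f x = f y -> x = y.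

Definition separable {T : Type} (op : topology T) : Prop :=
  exists D : T -> Prop, countable_set D /\
    forall U, op U -> (exists x, U x) -> exists x, D x /\ U x.

Definition completely_metrizable {T : Type} (op : topology T) : Prop :=
  exists d : T -> T -> R, is_metric d /\ complete_metric d /\
    forall U, op U <-> metric_open d U.

Definition subspace {Y : Type} (op : topology Y) (A : Y -> Prop) : topology {y | A y} :=
  fun V => exists U, op U /\ forall z : {y | A y}, V z <-> U (proj1_sig z).

Definition clopen {T : Type} (op : topology T) (A : T -> Prop) : Prop :=
  op A /\ op (fun x => ~ A x).

Definition C_set {T : Type} (op : topology T) (A : T -> Prop) : Prop :=
  exists F : (T -> Prop) -> Prop,
    (forall B, F B -> clopen op B) /\
    forall x, A x <-> (forall B, F B -> B x).

Definition neighborhood {T : Type} (op : topology T) (x : T) (N : T -> Prop) : Prop :=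
  exists U, op U /\ U x /\ forall y, U y -> N y.

Definition almost_zero_dimensional {T : Type} (op : topology T) : Prop :=
  forall x N, neighborhood op x N ->
    exists C, C_set op C /\ neighborhood op x C /\ forall y, C y -> N y.

Definition cohesive {T : Type} (op : topology T) : Prop :=
  forall x, exists N, neighborhood op x N /\
    forall A, clopen op A -> (forall y, A y -> N y) -> ~ (exists y, A y).

(* Main.v *)
Require Import Defs.
From Stdlib Require Import Reals Lra Lia Classical ClassicalEpsilon ProofIrrelevance Cantor.
Open Scope R_scope.

Definition sup01 (S : R -> Prop) (h0 : S 0) (hb : forall t, S t -> t <= 1) : R :=
  proj1_sig (completeness S (ex_intro _ 1 hb) (ex_intro _ 0 h0)).

Lemma sup01_ub S h0 hb t : S t -> t <= sup01 S h0 hb.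
Proof. unfold sup01. destruct completeness as [m [H1 H2]]. simpl. apply H1. Qed.

Lemma sup01_le S h0 hb c : (forall t, S t -> t <= c) -> sup01 S h0 hb <= c.
Proof. unfold sup01. destruct completeness as [m [H1 H2]]. simpl. apply H2. Qed.

Lemma sup01_ge0 S h0 hb : 0 <= sup01 S h0 hb.
Proof. apply sup01_ub; exact h0. Qed.

Lemma sup01_le1 S h0 hb : sup01 S h0 hb <= 1.
Proof. apply sup01_le; exact hb. Qed.

Lemma sup01_lt S h0 hb r : r < sup01 S h0 hb -> exists t, S t /\ r < t.
Proof.
  intro H. apply NNPP. intro C.
  assert (sup01 S h0 hb <= r). { apply sup01_le. intros t Ht.
    destruct (Rle_dec t r); auto. exfalso; apply C; exists t; split; auto; lra. }
  lra.
Qed.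

Section Alex.
Variable Y : Type.
Variable d : Y -> Y -> R.
Hypothesis hd : is_metric d.
Hypothesis hcomplete : complete_metric d.

Lemma d_nonneg x y : 0 <= d x y. Proof. apply hd. Qed.
Lemma d_refl x : d x x = 0. Proof. apply hd; reflexivity. Qed.
Lemma d_sym x y : d x y = d y x. Proof. apply hd. Qed.
Lemma d_tri x y z : d x z <= d x y + d y z. Proof. apply hd. Qed.
Lemma d_eq x y : d x y = 0 -> x = y. Proof. apply hd. Qed.

Variable F : Y -> Prop.
Hypothesis hF : forall u l, (forall n, F (u n)) -> converges d u l -> F l.
Variable W : nat -> Y -> Prop.
Hypothesis hW : forall n, metric_open d (W n).

Definition radS n x : R -> Prop := fun r => 0 <= r <= 1 /\ forall y, d x y < r -> W n y.
Lemma radS0 n x : radS n x 0.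
Proof. split. lra. intros y Hy. pose proof (d_nonneg x y). lra. Qed.
Lemma radSb n x t : radS n x t -> t <= 1.
Proof. intros [H _]; lra. Qed.
Definition rad n x := sup01 (radS n x) (radS0 n x) (radSb n x).

Lemma rad_ge0 n x : 0 <= rad n x. Proof. apply sup01_ge0. Qed.

Lemma rad_pos n x : W n x -> 0 < rad n x.
Proof.
  intro Hx. destruct (hW n x Hx) as [e [He Hb]].
  apply Rlt_le_trans with (Rmin e 1). apply Rmin_glb_lt; lra.
  apply sup01_ub. split. split. apply Rmin_case; lra. apply Rmin_r.
  intros y Hy. apply Hb. pose proof (Rmin_l e 1). lra.
Qed.

Lemma rad_W n x : 0 < rad n x -> W n x.
Proof.
  intro H. destruct (sup01_lt _ _ _ 0 H) as [t [[_ Ht] Ht0]].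
  apply Ht. rewrite d_refl. exact Ht0.
Qed.

Lemma rad_lip n x y : rad n x - d x y <= rad n y.
Proof.
  destruct (Rle_dec (rad n x - d x y) 0) as [H|H].
  - pose proof (rad_ge0 n y); lra.
  - apply Rnot_le_lt in H.
    destruct (Rle_dec (rad n x - d x y) (rad n y)) as [H'|H']; auto.
    apply Rnot_le_lt in H'.
    destruct (sup01_lt (radS n x) (radS0 n x) (radSb n x) (rad n y + d x y)) as [t [[Ht1 Ht2] Ht3]].
    { unfold rad in *. lra. }
    assert (t - d x y <= rad n y).
    { apply sup01_ub. split. pose proof (rad_ge0 n y). pose proof (d_nonneg x y). lra.
      intros z Hz. apply Ht2. pose proof (d_tri x y z). lra. }
    lra.
Qed.

Definition g n x := / rad n x.
Definition wt (n : nat) : R := / (INR n + 1).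
Lemma wt_pos n : 0 < wt n.
Proof. unfold wt. apply Rinv_0_lt_compat. pose proof (pos_INR n). lra. Qed.
Lemma wt_le1 n : wt n <= 1.
Proof. unfold wt. pose proof (pos_INR n). rewrite <- Rinv_1. apply Rinv_le_contravar; lra. Qed.
Lemma wt_anti n m : (n <= m)%nat -> wt m <= wt n.
Proof. intro H. unfold wt. apply le_INR in H. pose proof (pos_INR n). apply Rinv_le_contravar; lra. Qed.

Definition tm n x y := Rmin (wt n) (Rabs (g n x - g n y)).
Lemma tm_ge0 n x y : 0 <= tm n x y.
Proof. unfold tm. apply Rmin_case. pose proof (wt_pos n); lra. apply Rabs_pos. Qed.
Lemma tm_le n x y : tm n x y <= wt n. Proof. apply Rmin_l. Qed.
Lemma tm_sym n x y : tm n x y = tm n y x.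
Proof. unfold tm. rewrite Rabs_minus_sym. reflexivity. Qed.
Lemma tm_tri n x y z : tm n x z <= tm n x y + tm n y z.
Proof.
  unfold tm. pose proof (wt_pos n). pose proof (Rabs_triang (g n x - g n y) (g n y - g n z)).
  replace (g n x - g n y + (g n y - g n z)) with (g n x - g n z) in H0 by ring.
  pose proof (Rabs_pos (g n x - g n y)). pose proof (Rabs_pos (g n y - g n z)).
  repeat apply Rmin_case_strong; intros; lra.
Qed.

Definition sS x y : R -> Prop := fun t => t = 0 \/ exists n, t = tm n x y.
Lemma sS0 x y : sS x y 0. Proof. left; reflexivity. Qed.
Lemma sSb x y t : sS x y t -> t <= 1.
Proof. intros [->|[n ->]]. lra. pose proof (tm_le n x y); pose proof (wt_le1 n); lra. Qed.
Definition s x y := sup01 (sS x y) (sS0 x y) (sSb x y).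

Lemma s_ge0 x y : 0 <= s x y. Proof. apply sup01_ge0. Qed.
Lemma tm_le_s n x y : tm n x y <= s x y.
Proof. apply sup01_ub. right; exists n; reflexivity. Qed.
Lemma s_le x y c : 0 <= c -> (forall n, tm n x y <= c) -> s x y <= c.
Proof. intros H0 H. apply sup01_le. intros t [->|[n ->]]; auto. Qed.
Lemma s_sym x y : s x y = s y x.
Proof.
  apply Rle_antisym; apply s_le; try apply s_ge0; intro n; rewrite tm_sym; apply tm_le_s.
Qed.
Lemma s_tri x y z : s x z <= s x y + s y z.
Proof.
  apply s_le. pose proof (s_ge0 x y); pose proof (s_ge0 y z); lra.
  intro n. pose proof (tm_tri n x y z). pose proof (tm_le_s n x y). pose proof (tm_le_s n y z). lra.
Qed.
Lemma s_refl x : s x x = 0.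
Proof.
  apply Rle_antisym; [|apply s_ge0]. apply s_le. lra. intro n. unfold tm.
  replace (g n x - g n x) with 0 by ring. rewrite Rabs_R0. apply Rmin_r.
Qed.

Lemma g_cont n x : 0 < rad n x -> forall e, 0 < e -> exists del, 0 < del /\
  forall y, d x y < del -> Rabs (g n x - g n y) <= e.
Proof.
  intros Hr e He. set (a := rad n x) in *.
  exists (Rmin (a/2) (e * a * a / 2)). split.
  { apply Rmin_glb_lt. lra. assert (0 < e * a * a) by (repeat apply Rmult_lt_0_compat; auto). lra. }
  intros y Hy. pose proof (Rmin_l (a/2) (e*a*a/2)). pose proof (Rmin_r (a/2) (e*a*a/2)).
  pose proof (rad_lip n x y). pose proof (rad_lip n y x). rewrite d_sym in H2.
  set (b := rad n y) in *. fold a in H1; fold a in H2.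
  assert (Hb : a / 2 <= b) by lra.
  assert (Hab : Rabs (b - a) <= d x y). { apply Rabs_le. split; lra. }
  unfold g. fold a b.
  assert (Hb0 : 0 < b) by lra.
  assert (E1 : / a - / b = (b - a) * / (a * b)) by (field; lra).
  rewrite E1, Rabs_mult, (Rabs_right (/ (a*b))).
  2:{ apply Rle_ge, Rlt_le, Rinv_0_lt_compat, Rmult_lt_0_compat; lra. }
  apply (Rmult_le_reg_r (a * b)). apply Rmult_lt_0_compat; lra.
  rewrite Rmult_assoc, Rinv_l, Rmult_1_r. 2:{ apply Rgt_not_eq, Rmult_lt_0_compat; lra. }
  assert (e * a * a / 2 <= e * (a * b)).
  { assert (a * (a/2) <= a * b) by (apply Rmult_le_compat_l; lra). nra. }
  lra.
Qed.

Lemma s_cont x : (forall n, W n x) -> forall e, 0 < e -> exists del, 0 < del /\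
  forall y, d x y < del -> s x y <= e.
Proof.
  intros Hx e He.
  destruct (INR_archimed e 1 He) as [N HN].
  assert (HwN : wt N <= e).
  { unfold wt. assert (0 < INR N + 1) by (pose proof (pos_INR N); lra).
    apply (Rmult_le_reg_r (INR N + 1)); auto. rewrite Rinv_l by lra. nra. }
  assert (Hind : forall M, exists del, 0 < del /\ forall y, d x y < del ->
     forall n, (n < M)%nat -> tm n x y <= e).
  { induction M as [|M IH].
    - exists 1. split. lra. intros; lia.
    - destruct IH as [d1 [Hd1 Hd1']].
      destruct (g_cont M x (rad_pos M x (Hx M)) e He) as [d2 [Hd2 Hd2']].
      exists (Rmin d1 d2). split. apply Rmin_glb_lt; auto.
      intros y Hy n Hn. pose proof (Rmin_l d1 d2). pose proof (Rmin_r d1 d2).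
      destruct (Nat.eq_dec n M) as [->|Hne].
      + unfold tm. eapply Rle_trans. apply Rmin_r. apply Hd2'. lra.
      + apply Hd1'. lra. lia. }
  destruct (Hind N) as [del [Hdel Hdel']]. exists del. split; auto.
  intros y Hy. apply s_le. lra. intro n. destruct (Compare_dec.le_lt_dec N n) as [H|H].
  - pose proof (tm_le n x y). pose proof (wt_anti _ _ H). lra.
  - apply Hdel'; auto.
Qed.

Definition Ep (y : Y) := F y /\ forall n, W n y.
Definition T := {y | Ep y}.
Definition dd (u v : T) := d (proj1_sig u) (proj1_sig v) + s (proj1_sig u) (proj1_sig v).

Lemma dd_metric : is_metric dd.
Proof.
  unfold dd. split; [|split; [|split]].
  - intros; pose proof (d_nonneg (proj1_sig x) (proj1_sig y)); pose proof (s_ge0 (proj1_sig x) (proj1_sig y)); lra.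
  - intros [x hx] [y hy]; simpl. split.
    + intro H. pose proof (d_nonneg x y); pose proof (s_ge0 x y).
      assert (x = y) by (apply d_eq; lra). subst. f_equal. apply proof_irrelevance.
    + intro H. inversion H; subst. rewrite d_refl, s_refl. ring.
  - intros; rewrite d_sym, s_sym; reflexivity.
  - intros. pose proof (d_tri (proj1_sig x) (proj1_sig y) (proj1_sig z)).
    pose proof (s_tri (proj1_sig x) (proj1_sig y) (proj1_sig z)). lra.
Qed.

Lemma dd_ge_d u v : d (proj1_sig u) (proj1_sig v) <= dd u v.
Proof. unfold dd. pose proof (s_ge0 (proj1_sig u) (proj1_sig v)). lra. Qed.

Lemma dd_complete : complete_metric dd.
Proof.
  intros u Hu.
  assert (Hc : cauchy d (fun k => proj1_sig (u k))).
  { intros e He. destruct (Hu e He) as [N HN]. exists N. intros m n Hm Hn.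
    pose proof (dd_ge_d (u m) (u n)). pose proof (HN m n Hm Hn). lra. }
  destruct (hcomplete _ Hc) as [l Hl].
  assert (HFl : F l). { apply (hF (fun k => proj1_sig (u k)) l); auto. intro k. exact (proj1 (proj2_sig (u k))). }
  assert (HWl : forall n, W n l).
  { intro n. destruct (Hu (wt n) (wt_pos n)) as [N HN].
    set (M := g n (proj1_sig (u N)) + wt n).
    assert (HgN : forall p, (N <= p)%nat -> g n (proj1_sig (u p)) <= M).
    { intros p Hp. specialize (HN p N Hp (le_n N)).
      pose proof (tm_le_s n (proj1_sig (u p)) (proj1_sig (u N))).
      unfold dd in HN. pose proof (d_nonneg (proj1_sig (u p)) (proj1_sig (u N))).
      unfold tm in H. unfold M.
      destruct (Rle_dec (wt n) (Rabs (g n (proj1_sig (u p)) - g n (proj1_sig (u N))))) as [H2|H2].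
      - rewrite Rmin_left in H by auto. lra.
      - apply Rnot_le_lt in H2. pose proof (Rle_abs (g n (proj1_sig (u p)) - g n (proj1_sig (u N)))). lra. }
    assert (HM : 0 < M).
    { unfold M. pose proof (wt_pos n). unfold g.
      pose proof (rad_pos n _ (proj2 (proj2_sig (u N)) n)).
      pose proof (Rinv_0_lt_compat _ H0). lra. }
    destruct (Hl (/ M / 2)) as [K HK].
    { pose proof (Rinv_0_lt_compat _ HM); lra. }
    set (p := Nat.max N K).
    assert (Hp1 : (N <= p)%nat) by lia. assert (Hp2 : (K <= p)%nat) by lia.
    specialize (HK p Hp2). specialize (HgN p Hp1).
    pose proof (rad_pos n _ (proj2 (proj2_sig (u p)) n)).
    set (r := rad n (proj1_sig (u p))) in *.
    assert (Hr : / M <= r).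
    { unfold g in HgN. fold r in HgN. rewrite <- (Rinv_inv r). apply Rinv_le_contravar; auto.
      apply Rinv_0_lt_compat; auto. }
    apply rad_W. pose proof (rad_lip n (proj1_sig (u p)) l). fold r in H0.
    pose proof (Rinv_0_lt_compat _ HM). lra. }
  assert (HEl : Ep l) by (split; auto).
  exists (exist _ l HEl). intros e He.
  destruct (s_cont l HWl (e/2)) as [del [Hdel Hdel']]. lra.
  destruct (Hl (Rmin del (e/2))) as [N HN]. apply Rmin_glb_lt; lra.
  exists N. intros n Hn. specialize (HN n Hn). unfold dd. simpl.
  pose proof (Rmin_l del (e/2)). pose proof (Rmin_r del (e/2)).
  rewrite s_sym. assert (s l (proj1_sig (u n)) <= e/2) by (apply Hdel'; rewrite d_sym; lra).
  lra.
Qed.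

Lemma dd_topology : forall U, subspace (metric_open d) Ep U <-> metric_open dd U.
Proof.
  intro U. split.
  - intros [V [HV HUV]] x Hx. apply HUV in Hx. destruct (HV _ Hx) as [e [He He']].
    exists e. split; auto. intros y Hy. apply HUV. apply He'. pose proof (dd_ge_d x y). lra.
  - intro HU.
    exists (fun y => exists z del, U z /\ 0 < del /\ d (proj1_sig z) y < del /\
               forall z', d (proj1_sig z) (proj1_sig z') < del -> U z').
    split.
    + intros y [z [del [Hz [Hdel [Hy Hall]]]]]. exists (del - d (proj1_sig z) y). split. lra.
      intros y' Hy'. exists z, del. repeat split; auto. pose proof (d_tri (proj1_sig z) y y'). lra.
    + intro z. split.
      * intro Hz. destruct (HU z Hz) as [e [He He']].
        destruct (s_cont (proj1_sig z) (proj2 (proj2_sig z)) (e/2)) as [del [Hdel Hdel']]. lra.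
        exists z, (Rmin del (e/2)). split; auto. split. apply Rmin_glb_lt; lra.
        split. rewrite d_refl. apply Rmin_glb_lt; lra.
        intros z' Hz'. apply He'. unfold dd. pose proof (Rmin_l del (e/2)). pose proof (Rmin_r del (e/2)).
        assert (s (proj1_sig z) (proj1_sig z') <= e/2) by (apply Hdel'; lra). lra.
      * intros [z0 [del [_ [_ [Hy Hall]]]]]. apply Hall. exact Hy.
Qed.

Lemma alexandrov : completely_metrizable (subspace (metric_open d) Ep).
Proof.
  exists dd. split. apply dd_metric. split. apply dd_complete.
  intro U. symmetry. rewrite dd_topology. reflexivity.
Qed.

End Alex.

Section Main.
Variable Y : Type.
Variable d : Y -> Y -> R.
Hypothesis hd : is_metric d.
Variable D : Y -> Prop.
Variable f : Y -> nat.
Hypothesis hf : forall x y, D x -> D y -> f x = f y -> x = y.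
Hypothesis hdense : forall U, metric_open d U -> (exists x, U x) -> exists x, D x /\ U x.
Variable y0 : Y.
Variable E : Y -> Prop.
Hypothesis hcoh : cohesive (subspace (metric_open d) E).
Hypothesis hazd : almost_zero_dimensional (subspace (metric_open d) E).

Lemma m_nonneg x y : 0 <= d x y. Proof. apply (d_nonneg Y d hd). Qed.
Lemma m_refl x : d x x = 0. Proof. apply (d_refl Y d hd). Qed.
Lemma m_sym x y : d x y = d y x. Proof. apply (d_sym Y d hd). Qed.
Lemma m_tri x y z : d x z <= d x y + d y z. Proof. apply (d_tri Y d hd). Qed.

Definition en (n : nat) : Y := epsilon (inhabits y0)
  (fun y => (exists y', D y' /\ f y' = n) -> D y /\ f y = n).

Lemma en_dense x r : 0 < r -> exists n, d (en n) x < r.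
Proof.
  intro Hr. destruct (hdense (fun y => d x y < r)) as [q [Dq Hq]].
  - intros y Hy. exists (r - d x y). split. lra. intros z Hz. pose proof (m_tri x y z). lra.
  - exists x. rewrite m_refl. exact Hr.
  - exists (f q). assert (H : D (en (f q)) /\ f (en (f q)) = f q).
    { unfold en. apply (epsilon_spec (inhabits y0) (fun y => (exists y', D y' /\ f y' = f q) -> D y /\ f y = f q)).
      exists q. auto. exists q; auto. }
    destruct H as [H1 H2]. rewrite (hf _ _ H1 Dq H2). rewrite m_sym. exact Hq.
Qed.

Definition Ball (b : nat * nat) (y : Y) := d (en (fst b)) y < wt (snd b).

Lemma ball_open b : metric_open d (Ball b).
Proof.
  intros y Hy. unfold Ball in *. exists (wt (snd b) - d (en (fst b)) y). split. lra.
  intros z Hz. pose proof (m_tri (en (fst b)) y z). lra.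
Qed.

Lemma wt_small e : 0 < e -> exists m, 2 * wt m < e.
Proof.
  intro He. destruct (INR_archimed (e/2) 1) as [N HN]. lra.
  exists N. unfold wt. assert (0 < INR N + 1) by (pose proof (pos_INR N); lra).
  assert (/ (INR N + 1) < e / 2).
  { apply (Rmult_lt_reg_r (INR N + 1)); auto. rewrite Rinv_l by lra. nra. }
  lra.
Qed.

Lemma open_base U x : metric_open d U -> U x -> exists b, Ball b x /\ forall y, Ball b y -> U y.
Proof.
  intros HU Hx. destruct (HU x Hx) as [e [He He']].
  destruct (wt_small e He) as [m Hm]. destruct (en_dense x (wt m)) as [n Hn]. apply wt_pos.
  exists (n, m). unfold Ball; simpl. split; auto. intros y Hy. apply He'.
  pose proof (m_tri x (en n) y). rewrite m_sym in Hn. lra.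
Qed.

Lemma open_inter U V : metric_open d U -> metric_open d V -> metric_open d (fun y => U y /\ V y).
Proof.
  intros HU HV x [Ux Vx]. destruct (HU x Ux) as [e1 [H1 H1']]. destruct (HV x Vx) as [e2 [H2 H2']].
  exists (Rmin e1 e2). split. apply Rmin_glb_lt; auto.
  intros y Hy. pose proof (Rmin_l e1 e2). pose proof (Rmin_r e1 e2). split; [apply H1'|apply H2']; lra.
Qed.

Lemma open_pt U y : metric_open d U -> U y -> exists e, 0 < e /\ forall z, d y z < e -> U z.
Proof. intros HU Hy. apply HU; auto. Qed.

Definition SE := {y | E y}.
Definition topE := subspace (metric_open d) E.

Lemma sub_ext {P : Y -> Prop} (V V' : {y | P y} -> Prop) :
  subspace (metric_open d) P V -> (forall z, V z <-> V' z) -> subspace (metric_open d) P V'.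
Proof. intros [U [HU HUV]] H. exists U. split; auto. intro z. rewrite <- H. apply HUV. Qed.

Definition cohgood b := forall A : SE -> Prop, clopen topE A ->
  (forall z, A z -> Ball b (proj1_sig z)) -> ~ exists z, A z.

Lemma coh_cover x : E x -> exists b, cohgood b /\ Ball b x.
Proof.
  intro Hx. destruct (hcoh (exist _ x Hx)) as [N [[U [[V [HV HUV]] [Ux HUN]]] HN]].
  apply HUV in Ux. simpl in Ux. destruct (open_base V x HV Ux) as [b [Hb Hb']].
  exists b. split; auto. intros A HA HAb. apply HN; auto.
  intros y Hy. apply HUN. apply HUV. apply Hb'. apply HAb. exact Hy.
Qed.

Definition good (j k : nat * nat) := (forall y, Ball j y -> Ball k y) /\
  exists Fm : (SE -> Prop) -> Prop, (forall B, Fm B -> clopen topE B) /\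
    (forall z, Ball j (proj1_sig z) -> forall B, Fm B -> B z) /\
    (forall z, (forall B, Fm B -> B z) -> Ball k (proj1_sig z)).

Lemma good_cover x m : E x -> exists j k, good j k /\ snd k = m /\ Ball j x.
Proof.
  intro Hx. destruct (en_dense x (wt m) (wt_pos m)) as [n Hn].
  set (k := (n, m)). assert (Hk : Ball k x) by exact Hn.
  destruct (hazd (exist _ x Hx) (fun z => Ball k (proj1_sig z))) as [C [[Fm [HF1 HF2]] [[U [[V [HV HUV]] [Ux HUC]]] HCN]]].
  { exists (fun z => Ball k (proj1_sig z)). split.
    - exists (Ball k). split. apply ball_open. intro; reflexivity.
    - split; auto. }
  apply HUV in Ux. simpl in Ux.
  destruct (open_base (fun y => V y /\ Ball k y) x (open_inter _ _ HV (ball_open k))) as [j [Hj Hj']]; auto.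
  exists j, k. split; [|split; auto].
  split. intros y Hy; apply Hj'; auto. exists Fm. split; auto. split.
  - intros z Hz. apply HF2. apply HUC. apply HUV. apply Hj'. auto.
  - intros z Hz. apply HCN. apply HF2. auto.
Qed.

Definition PA (j b : nat * nat) (A : SE -> Prop) :=
  clopen topE A /\ (forall z, Ball j (proj1_sig z) -> A z) /\
  ((exists A', clopen topE A' /\ (forall z, Ball j (proj1_sig z) -> A' z) /\
      (forall z, Ball b (proj1_sig z) -> ~ A' z)) ->
   forall z, Ball b (proj1_sig z) -> ~ A z).

Lemma PA_ex j b : exists A, PA j b A.
Proof.
  destruct (classic (exists A', clopen topE A' /\ (forall z, Ball j (proj1_sig z) -> A' z) /\
      (forall z, Ball b (proj1_sig z) -> ~ A' z))) as [[A' [H1 [H2 H3]]]|H].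
  - exists A'. split; auto.
  - exists (fun _ => True). split; [split|split; auto].
    + exists (fun _ => True). split. intros y _. exists 1. split. lra. auto. intro; tauto.
    + exists (fun _ => False). split. intros y []. intro; tauto.
Qed.

Definition AA (j b : nat * nat) : SE -> Prop := epsilon (inhabits (fun _ => True)) (PA j b).
Lemma AA_spec j b : PA j b (AA j b).
Proof. unfold AA. apply (epsilon_spec (inhabits (fun _ : SE => True)) (PA j b)). apply PA_ex. Qed.

Definition clS (P : SE -> Prop) (y : Y) := forall e, 0 < e -> exists z, P z /\ d y (proj1_sig z) < e.
Definition clE (y : Y) := forall e, 0 < e -> exists x, E x /\ d y x < e.

Lemma clS_open_compl P : metric_open d (fun y => ~ clS P y).
Proof.
  intros y Hy. unfold clS in Hy. apply not_all_ex_not in Hy. destruct Hy as [e He].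
  apply imply_to_and in He. destruct He as [He He'].
  exists (e/2). split. lra. intros y' Hy' Hc. apply He'.
  destruct (Hc (e/2)) as [z [Pz Hz]]. lra.
  exists z. split; auto. pose proof (m_tri y y' (proj1_sig z)). lra.
Qed.

Lemma clS_in (P : SE -> Prop) z : P z -> clS P (proj1_sig z).
Proof. intros Hz e He. exists z. split; auto. rewrite m_refl. exact He. Qed.

Lemma clS_out (P : SE -> Prop) z : topE (fun w => ~ P w) -> ~ P z -> ~ clS P (proj1_sig z).
Proof.
  intros [U [HU HUP]] Hz Hc. apply HUP in Hz. destruct (HU _ Hz) as [e [He He']].
  destruct (Hc e He) as [w [Pw Hw]]. apply He' in Hw. apply HUP in Hw. auto.
Qed.

Lemma clE_split (P : SE -> Prop) y : clE y -> clS P y \/ clS (fun w => ~ P w) y.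
Proof.
  intro Hy. apply NNPP. intro H. apply not_or_and in H. destruct H as [H1 H2].
  apply not_all_ex_not in H1. destruct H1 as [e1 H1]. apply imply_to_and in H1. destruct H1 as [He1 H1].
  apply not_all_ex_not in H2. destruct H2 as [e2 H2]. apply imply_to_and in H2. destruct H2 as [He2 H2].
  destruct (Hy (Rmin e1 e2)) as [x [Ex Hx]]. apply Rmin_glb_lt; auto.
  pose proof (Rmin_l e1 e2). pose proof (Rmin_r e1 e2).
  destruct (classic (P (exist _ x Ex))) as [Hp|Hp].
  - apply H1. exists (exist _ x Ex). simpl. split; auto. lra.
  - apply H2. exists (exist _ x Ex). simpl. split; auto. lra.
Qed.

Lemma clE_closed u l : (forall n, clE (u n)) -> converges d u l -> clE l.
Proof.
  intros Hu Hl e He. destruct (Hl (e/2)) as [N HN]. lra.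
  destruct (Hu N (e/2)) as [x [Ex Hx]]. lra. exists x. split; auto.
  specialize (HN N (le_n N)). pose proof (m_tri l (u N) x). rewrite m_sym in HN. lra.
Qed.

Lemma clS_ball (P : SE -> Prop) j y : clE y -> Ball j y ->
  (forall z, Ball j (proj1_sig z) -> P z) -> clS P y.
Proof.
  intros Hy Hj HP e He. destruct (ball_open j y Hj) as [r [Hr Hr']].
  destruct (Hy (Rmin e r)) as [x [Ex Hx]]. apply Rmin_glb_lt; auto.
  pose proof (Rmin_l e r). pose proof (Rmin_r e r).
  exists (exist _ x Ex). simpl. split. apply HP. simpl. apply Hr'. lra. lra.
Qed.

Definition Cond0 y := exists b, cohgood b /\ Ball b y.
Definition Cond1 m y := exists j k, good j k /\ snd k = m /\ Ball j y.
Definition Cond2 j b y := ~ (clS (AA j b) y /\ clS (fun w => ~ AA j b w) y).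
Definition Cond3 j k y := good j k -> Ball k y \/ exists b, ~ clS (AA j b) y.

Definition WW (n : nat) (y : Y) : Prop :=
  match of_nat n with
  | (0, _) => Cond0 y
  | (1, r) => Cond1 r y
  | (2, r) => Cond2 (of_nat (fst (of_nat r))) (of_nat (snd (of_nat r))) y
  | (_, r) => Cond3 (of_nat (fst (of_nat r))) (of_nat (snd (of_nat r))) y
  end.

Lemma open_gen (P : Y -> Prop) :
  (forall y, P y -> exists U, metric_open d U /\ U y /\ forall z, U z -> P z) -> metric_open d P.
Proof.
  intros H y Hy. destruct (H y Hy) as [U [HU [Uy HUP]]]. destruct (HU y Uy) as [e [He He']].
  exists e. split; auto.
Qed.

Lemma Cond0_open : metric_open d Cond0.
Proof. apply open_gen. intros y [b [Hb Hy]]. exists (Ball b). split. apply ball_open. split; auto.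
  intros z Hz. exists b; auto. Qed.

Lemma Cond1_open m : metric_open d (Cond1 m).
Proof. apply open_gen. intros y [j [k [Hg [Hm Hy]]]]. exists (Ball j). split. apply ball_open. split; auto.
  intros z Hz. exists j, k; auto. Qed.

Lemma Cond2_open j b : metric_open d (Cond2 j b).
Proof.
  apply open_gen. intros y Hy. apply not_and_or in Hy. destruct Hy as [H|H].
  - eexists. split. apply clS_open_compl. split. exact H. intros z Hz [H1 _]. auto.
  - eexists. split. apply clS_open_compl. split. exact H. intros z Hz [_ H1]. auto.
Qed.

Lemma Cond3_open j k : metric_open d (Cond3 j k).
Proof.
  apply open_gen. intros y Hy. destruct (classic (good j k)) as [G|G].
  - destruct (Hy G) as [H|[b H]].
    + exists (Ball k). split. apply ball_open. split; auto. intros z Hz _. auto.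
    + eexists. split. apply clS_open_compl. split. exact H. intros z Hz _. right. exists b. auto.
  - exists (fun _ => True). split. intros w _. exists 1; split; auto; lra. split; auto.
    intros z _ Hg. contradiction.
Qed.

Lemma WW_open n : metric_open d (WW n).
Proof.
  unfold WW. destruct (of_nat n) as [t r]. destruct t as [|[|[|t]]].
  apply Cond0_open. apply Cond1_open. apply Cond2_open. apply Cond3_open.
Qed.

Lemma topE_clopen_compl (A : SE -> Prop) : clopen topE A -> topE (fun w => ~ ~ A w).
Proof. intros [H1 H2]. apply (sub_ext A); auto. intro; split; auto. apply NNPP. Qed.

Lemma E_WW x : E x -> forall n, WW n x.
Proof.
  intros Ex n. unfold WW. destruct (of_nat n) as [t r]. destruct t as [|[|[|t]]].
  - apply coh_cover; auto.
  - apply good_cover; auto.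
  - set (j := of_nat (fst (of_nat r))). set (b := of_nat (snd (of_nat r))).
    destruct (AA_spec j b) as [HAc _].
    intros [H1 H2]. destruct (classic (AA j b (exist _ x Ex))) as [Ha|Ha].
    + apply (clS_out (fun w => ~ AA j b w) (exist _ x Ex)); auto.
      apply topE_clopen_compl; auto.
    + apply (clS_out (AA j b) (exist _ x Ex)); auto. apply HAc.
  - set (j := of_nat (fst (of_nat r))). set (k := of_nat (snd (of_nat r))).
    intro G. destruct (classic (Ball k x)) as [Hk|Hk]; [left; auto|right].
    destruct G as [Gjk [Fm [HF1 [HF2 HF3]]]].
    assert (Hn : exists B, Fm B /\ ~ B (exist _ x Ex)).
    { apply NNPP. intro C. apply Hk. apply (HF3 (exist _ x Ex)). intros B HB.
      apply NNPP. intro C2. apply C. exists B. auto. }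
    destruct Hn as [B [HB HBx]]. destruct (HF1 B HB) as [_ [U [HU HUB]]].
    apply HUB in HBx. simpl in HBx. destruct (open_base U x HU HBx) as [b [Hb Hb']].
    exists b. destruct (AA_spec j b) as [_ [_ H3]].
    assert (Hdis : forall z, Ball b (proj1_sig z) -> ~ AA j b z).
    { apply H3. exists B. split. apply HF1; auto. split. intros z Hz. apply HF2; auto.
      intros z Hz. apply HUB. apply Hb'. auto. }
    intro Hc. destruct (ball_open b x Hb) as [e [He He']].
    destruct (Hc e He) as [z [Az Hz]]. apply (Hdis z); auto.
Qed.

Definition E' := Ep Y clE WW.

Lemma E_E' x : E x -> E' x.
Proof. intro Ex. split. intros e He. exists x. split; auto. rewrite m_refl; auto. apply E_WW; auto. Qed.

Lemma E'_c0 y : E' y -> Cond0 y.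
Proof. intros [_ H]. specialize (H (to_nat (0, 0)%nat)). unfold WW in H. rewrite cancel_of_to in H. exact H. Qed.
Lemma E'_c1 y m : E' y -> Cond1 m y.
Proof. intros [_ H]. specialize (H (to_nat (1, m)%nat)). unfold WW in H. rewrite cancel_of_to in H. exact H. Qed.
Lemma E'_c2 y j b : E' y -> Cond2 j b y.
Proof. intros [_ H]. specialize (H (to_nat (2, to_nat (to_nat j, to_nat b))%nat)). unfold WW in H.
  rewrite !cancel_of_to in H. simpl in H. rewrite !cancel_of_to in H. exact H. Qed.
Lemma E'_c3 y j k : E' y -> Cond3 j k y.
Proof. intros [_ H]. specialize (H (to_nat (3, to_nat (to_nat j, to_nat k))%nat)). unfold WW in H.
  rewrite !cancel_of_to in H. simpl in H. rewrite !cancel_of_to in H. exact H. Qed.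

Definition top' := subspace (metric_open d) E'.

Lemma E'_coh : cohesive top'.
Proof.
  intro x. destruct (E'_c0 _ (proj2_sig x)) as [b [Hb Hx]].
  exists (fun z => Ball b (proj1_sig z)). split.
  { exists (fun z => Ball b (proj1_sig z)). split. exists (Ball b). split. apply ball_open. intro; reflexivity.
    split; auto. }
  intros A [[U [HU HUA]] [V [HV HVA]]] HAb [z0 Hz0].
  set (lift := fun w : SE => exist E' (proj1_sig w) (E_E' _ (proj2_sig w))).
  apply (Hb (fun w => A (lift w))).
  - split.
    + exists U. split; [exact HU|]. intro w. rewrite HUA. simpl. reflexivity.
    + exists V. split; [exact HV|]. intro w. rewrite HVA. simpl. reflexivity.
  - intros w Hw. apply HAb in Hw. exact Hw.
  - apply HUA in Hz0. destruct (HU _ Hz0) as [e [He He']].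
    destruct (proj1 (proj2_sig z0) e He) as [y [Ey Hy]].
    exists (exist _ y Ey). apply HUA. simpl. apply He'. exact Hy.
Qed.

Lemma E'_azd : almost_zero_dimensional top'.
Proof.
  intros x N [U [[V [HV HUV]] [Ux HUN]]].
  apply HUV in Ux. destruct (HV _ Ux) as [e [He He']].
  destruct (wt_small e He) as [m Hm].
  destruct (E'_c1 _ m (proj2_sig x)) as [j [k [G [Hkm Hjx]]]].
  exists (fun z : {y | E' y} => forall b, clS (AA j b) (proj1_sig z)). split; [|split].
  - exists (fun B => exists b, forall z, B z <-> clS (AA j b) (proj1_sig z)). split.
    + intros B [b Hb]. split.
      * exists (fun y => ~ clS (fun w => ~ AA j b w) y). split. apply clS_open_compl.
        intro z. rewrite Hb. split.
        -- intros H1 H2. apply (E'_c2 _ j b (proj2_sig z)). split; auto.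
        -- intro H. destruct (clE_split (AA j b) _ (proj1 (proj2_sig z))); tauto.
      * exists (fun y => ~ clS (AA j b) y). split. apply clS_open_compl.
        intro z. rewrite Hb. reflexivity.
    + intro z. split.
      * intros H B [b Hb]. apply Hb. apply H.
      * intros H b. apply (H (fun z => clS (AA j b) (proj1_sig z))). exists b. intro; reflexivity.
  - exists (fun z => Ball j (proj1_sig z)). split.
    + exists (Ball j). split. apply ball_open. intro; reflexivity.
    + split; auto. intros z Hz b. apply (clS_ball _ j). apply (proj1 (proj2_sig z)). auto.
      apply (AA_spec j b).
  - intros z Hz. apply HUN. apply HUV. apply He'.
    destruct (E'_c3 _ j k (proj2_sig z) G) as [Hk|[b Hb]]; [|exfalso; auto].
    destruct G as [Gjk _]. apply Gjk in Hjx. unfold Ball in Hjx, Hk. rewrite Hkm in Hjx, Hk.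
    pose proof (m_tri (proj1_sig x) (en (fst k)) (proj1_sig z)). rewrite m_sym in Hjx. lra.
Qed.

End Main.

Theorem corollary3p2 (Y : Type) (d : Y -> Y -> R)
  (hd : is_metric d) (hcomplete : complete_metric d)
  (hsep : separable (metric_open d))
  (E : Y -> Prop) (hne : exists y, E y)
  (hcoh : cohesive (subspace (metric_open d) E))
  (hazd : almost_zero_dimensional (subspace (metric_open d) E)) :
  exists E' : Y -> Prop,
    (forall y, E y -> E' y) /\
    completely_metrizable (subspace (metric_open d) E') /\
    cohesive (subspace (metric_open d) E') /\
    almost_zero_dimensional (subspace (metric_open d) E').
Proof.
  destruct hsep as [D [[f hf] hdense]]. destruct hne as [y0 _].
  exists (E' Y d D f y0 E). split; [|split; [|split]].
  - exact (E_E' Y d hd D f hf hdense y0 E hcoh hazd).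
  - apply (alexandrov Y d hd hcomplete (clE Y d E) (clE_closed Y d hd E) (WW Y d D f y0 E)
      (WW_open Y d hd D f y0 E)).
  - exact (E'_coh Y d hd D f hf hdense y0 E hcoh hazd).
  - exact (E'_azd Y d hd D f y0 E).
Qed.
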